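(* Let $A$ be a cubical set. The formula $\forall (i:\mathbb{I})\,\forall(j:\mathbb{I})\,\forall(f:\mathbb{I}\to A).\ f(i)=f(j)$ holds in the internal logic of $\widehat{\mathcal{C}}$ if and only if $A\cong\Delta(a)$ for some set $a$.
   Context: $\mathcal{C}$ is the category of cubes: objects finite sets of names, morphisms $I\to J$ functions $J\to\mathrm{dM}(I)$ with $\mathrm{dM}(I)$ the free De Morgan algebra on $I$, composition by substitution. $\widehat{\mathcal{C}}$ is the presheaf topos of cubical sets; $\mathbb{I}$ is the presheaf $I\mapsto\mathrm{dM}(I)$. $\Delta:\mathrm{Set}\to\widehat{\mathcal{C}}$ is the constant presheaf functor. *)

(* Defs.v *)
From mathcomp Require Import all_boot.
Set Implicit Arguments. Unset Strict Implicit. Unset Printing Implicit Defensive.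

(* The free De Morgan algebra dM(n) on the n names 'I_n.                    *)
(* Concrete model: the free bounded distributive lattice on the 2n          *)
(* generators {x_i, x_i'} is the lattice of monotone boolean functions on   *)
(* bool^n * bool^n (pointwise order); the De Morgan negation is             *)
(*   (~ t)(x, y) = ~~ t(~~y, ~~x)   (swaps x_i and x_i' = 1 - i).           *)

Definition pt (n : nat) := ({ffun 'I_n -> bool} * {ffun 'I_n -> bool})%type.

Definition leb_pt n (p q : pt n) : bool :=
  [forall i, (p.1 i <= q.1 i) && (p.2 i <= q.2 i)].

Definition monob n (f : {ffun pt n -> bool}) : bool :=
  [forall p, forall q, leb_pt p q ==> (f p <= f q)].

Lemma monoP n (f : {ffun pt n -> bool}) :
  reflect (forall p q, leb_pt p q -> f p <= f q) (monob f).
Proof.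
apply: (iffP idP).
- by move=> /forallP H p q Hpq; move: (H p) => /forallP /(_ q) /implyP; apply.
- by move=> H; apply/forallP => p; apply/forallP => q; apply/implyP; apply: H.
Qed.

Definition dM (n : nat) := {f : {ffun pt n -> bool} | monob f}.

Lemma gen_mono n (i : 'I_n) : monob [ffun p : pt n => p.1 i].
Proof.
apply/monoP => p q /forallP /(_ i) /andP [H _]; by rewrite !ffunE.
Qed.
Definition gen n (i : 'I_n) : dM n := exist (@monob n) _ (gen_mono i).

Definition negpt n (p : pt n) : pt n :=
  ([ffun i => ~~ p.2 i], [ffun i => ~~ p.1 i]).
Lemma neg_mono n (t : dM n) : monob [ffun p => ~~ val t (negpt p)].
Proof.
apply/monoP => p q Hpq; rewrite !ffunE leq_eqVlt.
have : val t (negpt q) <= val t (negpt p).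
  move/monoP: (valP t) => Ht; apply: Ht; apply/forallP => i; rewrite !ffunE /=.
  move: Hpq => /forallP /(_ i) /andP [] /=.
  by case: (p.1 i); case: (q.1 i); case: (p.2 i); case: (q.2 i).
by do 2!case: (val t _).
Qed.
Definition dneg n (t : dM n) : dM n := exist (@monob n) _ (neg_mono t).

Lemma dM_le n (t : dM n) p q : leb_pt p q -> val t p <= val t q.
Proof. by move/monoP: (valP t); apply. Qed.

Lemma subst_mono m n (t : dM m) (s : 'I_m -> dM n) :
  monob [ffun p => val t ([ffun j => val (s j) p], [ffun j => val (dneg (s j)) p])].
Proof.
apply/monoP => p q Hpq; rewrite !ffunE; move/monoP: (valP t) => Ht; apply: Ht.
apply/forallP => j; rewrite !ffunE /=; apply/andP; split.
- by move/monoP: (valP (s j)); apply.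
- by have := dM_le (dneg (s j)) Hpq; rewrite /= !ffunE.
Qed.
Definition subst m n (t : dM m) (s : 'I_m -> dM n) : dM n :=
  exist (@monob n) _ (subst_mono t s).

(* The category of cubes C (skeleton: the object n is the set of names     *)
(* 'I_n).  A morphism n -> m is a function 'I_m -> dM n; composition is    *)
(* substitution.                                                            *)

Definition hom (n m : nat) := 'I_m -> dM n.
Definition idh (n : nat) : hom n n := fun i => gen i.
Definition comp n m k (g : hom m k) (f : hom n m) : hom n k :=
  fun x => subst (g x) f.

Record cset := CSet {
  cobj :> nat -> Type;
  cact : forall n m, hom n m -> cobj m -> cobj n;
  cact_id : forall n (x : cobj n), cact (@idh n) x = x;
  cact_comp : forall n m k (f : hom n m) (g : hom m k) (x : cobj k),
      cact (comp g f) x = cact f (cact g x)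
}.

Record nat_trans (A B : cset) := NatTrans {
  nt :> forall n, A n -> B n;
  nt_nat : forall n m (f : hom n m) (x : A m),
      nt (cact f x) = cact f (nt x)
}.

Definition cset_iso (A B : cset) : Prop :=
  exists (phi : nat_trans A B) (psi : nat_trans B A),
    (forall n (x : A n), psi n (phi n x) = x) /\
    (forall n (y : B n), phi n (psi n y) = y).

Definition Delta (a : Type) : cset :=
  @CSet (fun _ => a) (fun _ _ _ x => x) (fun _ _ => erefl) (fun _ _ _ _ _ _ => erefl).

(* The interval I : n |-> dM n, acting by substitution. *)
Definition Iact n m (f : hom n m) (t : dM m) : dM n := subst t f.

(* The exponential A^I at stage I: natural transformations y(I) x I -> A,
   i.e. families f_J : hom J I * dM J -> A J natural in J. *)
Record exp_el (A : cset) (I : nat) := ExpEl {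
  ef :> forall J, hom J I -> dM J -> A J;
  ef_nat : forall J J' (g : hom J' J) (h : hom J I) (t : dM J),
      ef (comp h g) (Iact g t) = cact g (ef h t)
}.

Definition ev (A : cset) I (f : exp_el A I) (i : dM I) : A I := f I (@idh I) i.

(* Interpretation of  forall (i:I) (j:I) (f:I -> A). f(i) = f(j)  in the
   internal logic: the equalizer of the two maps ev o (f,i), ev o (f,j) :
   I x I x A^I -> A is the whole object, i.e. the two maps agree at every
   stage and on every generalized element. *)
Definition forall_paths_const (A : cset) : Prop :=
  forall (I : nat) (i j : dM I) (f : exp_el A I), ev f i = ev f j.

(* Main.v *)
Require Import Defs.
From mathcomp Require Import all_boot.
From Stdlib Require Import FunctionalExtensionality.
Set Implicit Arguments. Unset Strict Implicit. Unset Printing Implicit Defensive.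

Lemma dM_ext n (u v : dM n) : (forall p : pt n, sval u p = sval v p) -> u = v.
Proof. by move=> H; apply: val_inj; apply/ffunP. Qed.

Lemma val_subst m n (t : dM m) (s : 'I_m -> dM n) p :
  sval (subst t s) p = sval t ([ffun j => sval (s j) p], [ffun j => ~~ sval (s j) (negpt p)]).
Proof. by rewrite /subst /= ffunE; congr (sval t _); congr (_, _); apply/ffunP=> j; rewrite !ffunE. Qed.

Lemma negptK n (p : pt n) : negpt (negpt p) = p.
Proof. by case: p => a b; rewrite /negpt /=; congr (_,_); apply/ffunP=> i; rewrite !ffunE negbK. Qed.

Lemma subst_assoc m n k (t : dM m) (s : 'I_m -> dM n) (g : 'I_n -> dM k) :
  subst (subst t s) g = subst t (fun j => subst (s j) g).
Proof.
apply: dM_ext => p. rewrite !val_subst; congr (sval t _); congr (_,_); apply/ffunP=> j;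
rewrite !ffunE /=.
  by congr (sval (s j) (_,_)); apply/ffunP=> i; rewrite !ffunE.
congr (~~ sval (s j) _); rewrite /negpt /=; congr (_,_); apply/ffunP=> i; rewrite !ffunE /= ?negbK //.
do 2 f_equal; case: p => a b /=; congr (_,_); apply/ffunP => x; by rewrite !ffunE negbK.
Qed.

Lemma subst_gen m n (k : 'I_m) (s : 'I_m -> dM n) : subst (gen k) s = s k.
Proof. by apply: dM_ext => p; rewrite val_subst /= !ffunE. Qed.

Lemma subst_id n (t : dM n) : subst t (@idh n) = t.
Proof.
apply: dM_ext => p; rewrite val_subst; congr (sval t _).
case: p => a b; congr (_,_); apply/ffunP=> j; rewrite !ffunE /= ?ffunE ?negbK //.
Qed.

Lemma subst_eq m n (t : dM m) (s s' : 'I_m -> dM n) : s =1 s' -> subst t s = subst t s'.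
Proof.
move=> H; apply: dM_ext => p; rewrite !val_subst; congr (sval t _); congr (_,_);
by apply/ffunP=> j; rewrite !ffunE H.
Qed.

Definition o0 : 'I_3 := @Ordinal 3 0 isT.
Definition o1 : 'I_3 := @Ordinal 3 1 isT.
Definition o2 : 'I_3 := @Ordinal 3 2 isT.

Lemma T3_mono : monob [ffun p : pt 3 => (p.1 o0 && p.2 o2) || (p.1 o1 && p.1 o2)].
Proof.
apply/monoP => p q /forallP H; rewrite !ffunE.
move: (H o0) (H o1) (H o2) => /andP[a0 b0] /andP[a1 b1] /andP[a2 b2].
move: a0 b0 a1 b1 a2 b2.
by case: (p.1 o0); case: (q.1 o0); case: (p.2 o2); case: (q.2 o2);
   case: (p.1 o1); case: (q.1 o1); case: (p.1 o2); case: (q.1 o2).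
Qed.
Definition T3 : dM 3 := exist (@monob 3) _ T3_mono.

Lemma val_T3 n (s : 'I_3 -> dM n) p :
  sval (subst T3 s) p = (sval (s o0) p && ~~ sval (s o2) (negpt p)) || (sval (s o1) p && sval (s o2) p).
Proof. by rewrite val_subst /= !ffunE. Qed.

Lemma cst_mono n (b : bool) : monob [ffun _ : pt n => b].
Proof. by apply/monoP => p q _; rewrite !ffunE. Qed.
Definition cst n b : dM n := exist (@monob n) _ (cst_mono n b).

Definition triple n (a b c : dM n) : 'I_3 -> dM n :=
  fun k => match nat_of_ord k with 0 => a | 1 => b | _ => c end.

Lemma T3_0 n (a b : dM n) : subst T3 (triple a b (cst n false)) = a.
Proof. by apply: dM_ext => p; rewrite val_T3 /= !ffunE andbT andbF orbF. Qed.
Lemma T3_1 n (a b : dM n) : subst T3 (triple a b (cst n true)) = b.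
Proof. by apply: dM_ext => p; rewrite val_T3 /= !ffunE andbT andbF. Qed.

Lemma triple_subst n k (a b c : dM n) (g : 'I_n -> dM k) :
  (fun j => subst (triple a b c j) g) = triple (subst a g) (subst b g) (subst c g).
Proof.
by apply: functional_extensionality => -[[|[|[|j]]] Hj].
Qed.

Section Key.
Variable A : cset.
Hypothesis HA : forall_paths_const A.

Definition sig_ n m (f f' : hom m n) J (h : hom J m) (t : dM J) : hom J n :=
  fun k => subst T3 (triple (subst (f k) h) (subst (f' k) h) t).

Lemma key n m (f f' : hom m n) (x : A n) : cact f x = cact f' x.
Proof.
pose F := fun J (h : hom J m) (t : dM J) => cact (sig_ f f' h t) x.
have Fnat : forall J J' (g : hom J' J) (h : hom J m) (t : dM J),
    F J' (Defs.comp h g) (Iact g t) = cact g (F J h t).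
  move=> J J' g h t; rewrite /F -cact_comp; congr (cact _ x).
  apply: functional_extensionality => k; rewrite /Defs.comp /sig_ /Iact subst_assoc.
  rewrite triple_subst !subst_assoc.
  by congr (subst T3 (triple _ _ _)); apply: subst_eq.
have := HA (cst m false) (cst m true) (ExpEl Fnat).
rewrite /ev /= /F.
have -> : sig_ f f' (@idh m) (cst m false) = f.
  by apply: functional_extensionality => k; rewrite /sig_ T3_0 subst_id.
have -> : sig_ f f' (@idh m) (cst m true) = f'.
  by apply: functional_extensionality => k; rewrite /sig_ T3_1 subst_id.
by [].
Qed.
End Key.

Lemma iso_triv (A : cset) a : cset_iso A (Delta a) ->
  forall n m (f f' : hom n m) (x : A m), cact f x = cact f' x.
Proof.
move=> [phi [psi [H1 H2]]] n m f f' x.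
rewrite -(H1 _ (cact f x)) -(H1 _ (cact f' x)) !(nt_nat phi) //.
Qed.

Definition zh n : hom 0 n := fun _ => cst 0 false.
Definition eh n : hom n 0 := fun _ => cst n false.

Lemma fwd (A : cset) : forall_paths_const A -> exists a : Type, cset_iso A (Delta a).
Proof.
move=> HA; exists (A 0).
have K := key HA.
have nphi : forall n m (f : hom n m) (x : A m),
   cact (@zh n) (cact f x) = @cact (Delta (A 0)) _ _ f (cact (@zh m) x).
  by move=> n m f x; rewrite -cact_comp; apply: K.
have npsi : forall n m (f : hom n m) (y : A 0),
   cact (@eh n) (@cact (Delta (A 0)) _ _ f y) = cact f (cact (@eh m) y).
  by move=> n m f y; rewrite -cact_comp; apply: K.
exists (@NatTrans A (Delta (A 0)) (fun n x => cact (@zh n) x) nphi), (@NatTrans (Delta (A 0)) A (fun n y => cact (@eh n) y) npsi); split => n x /=.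
  by rewrite -cact_comp (K _ _ _ (@idh n)) cact_id.
by rewrite -cact_comp (K _ _ _ (@idh 0)) cact_id.
Qed.

Definition hI I : hom I.+1 I := fun x => gen (lift ord_max x).
Definition gI I b : hom I I.+1 :=
  fun y => if unlift ord_max y is Some x then gen x else cst I b.

Lemma hg I b : Defs.comp (@hI I) (@gI I b) = @idh I.
Proof.
apply: functional_extensionality => x; rewrite /Defs.comp /hI subst_gen /gI.
by rewrite liftK.
Qed.

Lemma bwd (A : cset) : (exists a : Type, cset_iso A (Delta a)) -> forall_paths_const A.
Proof.
move=> [a Hiso] I i j f; rewrite /ev.
pose t := subst T3 (triple (subst i (@hI I)) (subst j (@hI I)) (gen ord_max)).
have E : forall b, Iact (@gI I b) t = subst T3 (triple i j (cst I b)).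
  move=> b; rewrite /Iact /t subst_assoc triple_subst !subst_assoc.
  rewrite subst_gen /gI unlift_none.
  have -> : (fun j0 => subst (@hI I j0) (@gI I b)) = @idh I by apply: (@hg I b).
  by rewrite !subst_id.
have -> : i = Iact (@gI I false) t by rewrite E T3_0.
have -> : j = Iact (@gI I true) t by rewrite E T3_1.
rewrite -{1}(@hg I false) -{1}(@hg I true) !ef_nat.
exact: (iso_triv Hiso).
Qed.

Theorem mainTheorem5 (A : cset) :
  forall_paths_const A <-> exists a : Type, cset_iso A (Delta a).
Proof. split; [exact: fwd | exact: bwd]. Qed.
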